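(* Let $\pi,\rho\in S_k$. Then: (1) $\kappa^\rho_\pi(\mathbf w)$ is a rational function with at most simple poles at $w_i=w_j$ ($i<j$) and no other singularities; i.e. $\prod_{i<j}(w_j-w_i)\kappa^\rho_\pi(\mathbf w)$ is a polynomial in $w_1,\dots,w_k$. (2) If $a<b$ and $\rho^{-1}(a)>\rho^{-1}(b)$, then $\kappa^\rho_\pi(\mathbf w)|_{w_a=z,\,w_b=qz}=0$. (3) If $\pi(\rho^{-1}(a))<a$ then $\kappa^\rho_\pi(\mathbf w)|_{w_a=0}=0$; if $\pi(\rho^{-1}(a))>a$ then $\kappa^\rho_\pi(\mathbf w)|_{w_a\to\infty}=0$.
   Context: $q$ is a fixed parameter (in $(0,1)$). For $\rho\in S_k$, $t_\rho f(w_1,\dots,w_k)=f(w_{\rho(1)},\dots,w_{\rho(k)})$; $T_i=q+\frac{w_{i+1}-qw_i}{w_{i+1}-w_i}(t_{\sigma_i}-1)$ where $\sigma_i$ is the transposition of $i,i+1$; $T_\pi=T_{i_1}\cdots T_{i_l}$ for a reduced word $\pi=\sigma_{i_1}\cdots\sigma_{i_l}$. The rational functions $\kappa^\rho_\pi(\mathbf w)$ are defined by $T_\pi=\sum_{\rho\in S_k}\kappa^\rho_\pi(\mathbf w)t_\rho$. *)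

(* Defs.v *)
From HB Require Import structures.
From mathcomp Require Import all_boot all_order all_algebra all_fingroup.
From mathcomp Require Export mpoly.
Set Implicit Arguments. Unset Strict Implicit. Unset Printing Implicit Defensive.
Import Order.TTheory GRing.Theory Num.Theory.
Local Open Scope ring_scope.

(* Points w = (w_1,...,w_k) are functions 'I_k -> R (indices shifted to 0..k-1). *)

(* An operator sum_rho c_rho(w) t_rho, stored by its coefficient functions. *)
Definition op (k : nat) (R : Type) := 'S_k -> ('I_k -> R) -> R.

Section Ops.
Variables (R : fieldType) (k : nat).

(* (t_rho f)(w) = f(w_{rho(1)},...,w_{rho(k)}) = f (w \o rho). *)
Definition permpt (rho : 'S_k) (w : 'I_k -> R) : 'I_k -> R := fun j => w (rho j).

Definition opid : op k R := fun rho _ => if rho == 1%g then 1 else 0.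

(* composition: (a t_rho)(b t_sig) = a (t_rho b) t_(rho o sig);
   coefficient of t_tau collects rho o sig = tau, i.e. sig = rho^-1 o tau,
   which in MathComp's (left-to-right) perm product is tau * rho^-1. *)
Definition opmul (A B : op k R) : op k R := fun tau w =>
  \sum_(rho : 'S_k) A rho w * B (tau * rho^-1)%g (permpt rho w).

(* i+1 as an element of 'I_k (meaningful when i.+1 < k) *)
Definition nxt (i : 'I_k) : 'I_k := insubd i i.+1.

Definition sigma (i : 'I_k) : 'S_k := tperm i (nxt i).

(* T_i = q + (w_{i+1} - q w_i)/(w_{i+1} - w_i) (t_{sigma_i} - 1) *)
Definition Tcoef (q : R) (i : 'I_k) (w : 'I_k -> R) : R :=
  (w (nxt i) - q * w i) / (w (nxt i) - w i).

Definition Top (q : R) (i : 'I_k) : op k R := fun rho w =>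
  if rho == 1%g then q - Tcoef q i w
  else if rho == sigma i then Tcoef q i w else 0.

(* product of a word [i1; ...; il] as the composition sigma_i1 o ... o sigma_il
   (composition g o f is f * g in MathComp) *)
Definition word_perm (s : seq 'I_k) : 'S_k :=
  foldr (fun i p => (p * sigma i)%g) 1%g s.

Definition valid_word (s : seq 'I_k) : bool := all (fun i : 'I_k => (i.+1 < k)%N) s.

Definition reduced_word (s : seq 'I_k) (pi : 'S_k) : Prop :=
  [/\ valid_word s, word_perm s = pi &
      forall s', valid_word s' -> word_perm s' = pi -> (size s <= size s')%N].

Definition Tword (q : R) (s : seq 'I_k) : op k R :=
  foldr (fun i A => opmul (Top q i) A) opid s.

(* kappa^rho_pi(w), computed from a reduced word s of pi *)
Definition kappa (q : R) (s : seq 'I_k) (rho : 'S_k) (w : 'I_k -> R) : R :=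
  Tword q s rho w.

Definition generic (w : 'I_k -> R) : Prop := forall i j, i != j -> w i != w j.

Definition vdm (w : 'I_k -> R) : R :=
  \prod_(i : 'I_k) \prod_(j : 'I_k | (i < j)%N) (w j - w i).

Definition upd (w : 'I_k -> R) (a : 'I_k) (t : R) : 'I_k -> R :=
  fun j => if j == a then t else w j.

End Ops.

(* Main.v *)
Require Import Defs.
From HB Require Import structures.
From mathcomp Require Import all_boot all_order all_algebra all_fingroup.
From mathcomp Require Import mpoly.
From mathcomp Require Import ring lra zify.
From Stdlib Require Import FunctionalExtensionality.
Import Order.TTheory GRing.Theory Num.Theory.
Local Open Scope ring_scope.
Section OpAlg.
Variables (R : fieldType) (k : nat).
Implicit Types (A B C : op k R) (q : R) (s : seq (ordinal k)).

Lemma permptM (r s : 'S_k) (w : 'I_k -> R) :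
  permpt s (permpt r w) = permpt (s * r)%g w.
Proof. by apply: functional_extensionality => j; rewrite /permpt permM. Qed.

Lemma permpt1 (w : 'I_k -> R) : permpt 1%g w = w.
Proof. by apply: functional_extensionality => j; rewrite /permpt perm1. Qed.

Lemma opmulA A B C : opmul A (opmul B C) = opmul (opmul A B) C.
Proof.
apply: functional_extensionality => tau; apply: functional_extensionality => w.
rewrite /opmul.
under eq_bigr do rewrite big_distrr /=.
under [RHS]eq_bigr do rewrite big_distrl /=.
rewrite [RHS]exchange_big /=; apply: eq_bigr => s _.
rewrite [RHS](reindex_inj (mulIg s)) /=; apply: eq_bigr => v _.
by rewrite mulgK invMg !mulgA permptM mulrA.
Qed.

Lemma opmul1 A : opmul A (@opid R k) = A.
Proof.
apply: functional_extensionality => tau; apply: functional_extensionality => w.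
rewrite /opmul (bigD1 tau) //= big1 ?addr0.
  by rewrite /opid mulgV eqxx mulr1.
move=> r hr; rewrite /opid.
have -> : (tau * r^-1 == 1)%g = false.
  by apply/negbTE; rewrite -eq_mulgV1 eq_sym.
by rewrite mulr0.
Qed.

Lemma op1mul A : opmul (@opid R k) A = A.
Proof.
apply: functional_extensionality => tau; apply: functional_extensionality => w.
rewrite /opmul (bigD1 1%g) //= big1 ?addr0.
  by rewrite /opid eqxx mul1r invg1 mulg1 permpt1.
by move=> r hr; rewrite /opid (negbTE hr) mul0r.
Qed.

Lemma Tword_rcons q s i : Tword q (rcons s i) = opmul (Tword q s) (Top q i).
Proof.
elim: s => [|j s IH] /=; first by rewrite opmul1 op1mul.
by rewrite IH opmulA.
Qed.

Lemma word_perm_rcons s i : word_perm (rcons s i) = (sigma i * word_perm s)%g.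
Proof.
elim: s => [|j s IH] /=; first by rewrite mul1g mulg1.
by rewrite IH mulgA.
Qed.

Lemma nxtE (i : 'I_k) : (i.+1 < k)%N -> val (nxt i) = i.+1.
Proof. by move=> h; rewrite /nxt val_insubd h. Qed.

Lemma nxt_neq (i : 'I_k) : (i.+1 < k)%N -> (nxt i != i).
Proof. by move=> h; apply/eqP => /(congr1 val); rewrite nxtE //= => /esym/n_Sn. Qed.

Lemma sigma_neq1 (i : 'I_k) : (i.+1 < k)%N -> sigma i != 1%g.
Proof.
move=> h; apply/eqP => /(congr1 (fun p : 'S_k => p i)).
by rewrite /sigma tpermL perm1 => /eqP; rewrite (negbTE (nxt_neq i h)).
Qed.

Lemma sigmaL (i : 'I_k) : sigma i i = nxt i.
Proof. by rewrite /sigma tpermL. Qed.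
Lemma sigmaR (i : 'I_k) : sigma i (nxt i) = i.
Proof. by rewrite /sigma tpermR. Qed.
Lemma sigmaV (i : 'I_k) : ((sigma i)^-1 = sigma i)%g.
Proof. by rewrite /sigma tpermV. Qed.
Lemma sigma2 (i : 'I_k) : (sigma i * sigma i = 1)%g.
Proof. by rewrite /sigma tperm2. Qed.

Lemma sigma_val (i j : 'I_k) : (i.+1 < k)%N ->
  (sigma i j : nat) = if (j : nat) == i then i.+1
                    else if (j : nat) == i.+1 then (i : nat) else j.
Proof.
move=> h; rewrite /sigma; case: tpermP => [->|->|/eqP a /eqP b].
- by rewrite eqxx (nxtE i h).
- rewrite (nxtE i h); case: eqP => [/esym/n_Sn //|_]; by rewrite eqxx.
- have a' : val j != val i by apply: contra a => /eqP/val_inj ->.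
  have b' : val j != i.+1 by rewrite -(nxtE i h); apply: contra b => /eqP/val_inj ->.
  by rewrite (negbTE a') (negbTE b').
Qed.

Lemma Kstep A q (i : 'I_k) tau w : (i.+1 < k)%N ->
  opmul A (Top q i) tau w =
  A tau w * (q - Tcoef q i (permpt tau w)) +
  A (sigma i * tau)%g w * Tcoef q i (permpt (sigma i * tau)%g w).
Proof.
move=> h; rewrite /opmul (bigD1 tau) //= (bigD1 (sigma i * tau)%g) /=; last first.
  apply/negP => /eqP /(congr1 (fun p => p * tau^-1)%g).
  by rewrite mulgK mulgV; apply/eqP; rewrite sigma_neq1.
rewrite big1 ?addr0; last first.
  move=> r /andP[h1 h2]; rewrite /Top.
  have -> : (tau * r^-1 == 1)%g = false by apply/negbTE; rewrite -eq_mulgV1 eq_sym.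
  have -> : (tau * r^-1 == sigma i)%g = false.
    apply/negbTE; apply: contra h2 => /eqP e.
    by apply/eqP; rewrite -sigmaV -e invMg invgK -mulgA mulVg mulg1.
  by rewrite mulr0.
rewrite mulgV /Top eqxx invMg mulgA mulgV mul1g sigmaV.
by rewrite (negbTE (sigma_neq1 i h)) eqxx.
Qed.

Lemma Krec q s (i : 'I_k) tau w : (i.+1 < k)%N ->
  Tword q (rcons s i) tau w =
  Tword q s tau w * (q - (w (tau (nxt i)) - q * w (tau i)) / (w (tau (nxt i)) - w (tau i))) +
  Tword q s (sigma i * tau)%g w * ((w (tau i) - q * w (tau (nxt i))) / (w (tau i) - w (tau (nxt i)))).
Proof.
move=> h; rewrite Tword_rcons Kstep // /Tcoef /permpt !permM sigmaL sigmaR //.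
Qed.

End OpAlg.
Arguments nxt_neq {k i} _.
Arguments nxtE {k} i _.
Arguments sigma_neq1 {k} i _.
Section Vanish.
Variables (R : fieldType) (k : nat).
Implicit Types (q : R) (s : seq (ordinal k)).

Lemma sigma_lt (i j l : 'I_k) : (i.+1 < k)%N -> (j < l)%N ->
  ~~ (((j : nat) == i) && ((l : nat) == i.+1)) -> (sigma i j < sigma i l)%N.
Proof.
move=> h jl; rewrite !sigma_val //.
move=> hn; move: hn; repeat case: ifP => /eqP ?; rewrite /=; try lia.
Qed.

Lemma valid_rcons s i : valid_word (rcons s i) = valid_word s && (i.+1 < k)%N.
Proof. by rewrite /valid_word all_rcons andbC. Qed.

Lemma permV_sigma (i : 'I_k) (tau : 'S_k) x :
  ((sigma i * tau)^-1)%g x = sigma i ((tau^-1)%g x).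
Proof. by rewrite invMg permM sigmaV. Qed.

Lemma K_vanish_q q s (tau : 'S_k) (a b : 'I_k) w : valid_word s ->
  (a < b)%N -> ((tau^-1)%g b < (tau^-1)%g a)%N -> w b = q * w a ->
  Tword q s tau w = 0.
Proof.
move=> + ab + wab; elim/last_ind: s tau => [|s i IH] tau.
  move=> _ h; rewrite /= /opid; case: eqP => // e.
  by move: h; rewrite e invg1 !perm1; lia.
rewrite valid_rcons => /andP[hs hi] h.
rewrite Krec // IH // mul0r add0r.
case E: ((((tau^-1)%g b : nat) == i) && (((tau^-1)%g a : nat) == i.+1)).
  move/andP: E => [/eqP e1 /eqP e2].
  have -> : tau i = b.
    by rewrite -[b](permKV tau); congr (tau _); apply: val_inj.
  have -> : tau (nxt i) = a.
    by rewrite -[a](permKV tau); congr (tau _); apply: val_inj; rewrite nxtE.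
  by rewrite wab subrr mul0r mulr0.
rewrite IH ?mul0r // !permV_sigma; apply: sigma_lt => //; by rewrite E.
Qed.

End Vanish.
Section Inv.
Variable k : nat.

Definition inv (p : 'S_k) : nat :=
  (\sum_(j : 'I_k) \sum_(l : 'I_k) (((j < l)%N && (p l < p j)%N) : nat))%N.

Lemma sigma_lt_eq (i j l : 'I_k) : (i.+1 < k)%N ->
  ~~ (((j : nat) == i) && ((l : nat) == i.+1)) ->
  ~~ (((j : nat) == i.+1) && ((l : nat) == i)) ->
  (j < l)%N = (sigma i j < sigma i l)%N.
Proof.
move=> h; rewrite !sigma_val //.
move=> h1 h2; apply/idP/idP; move: h1 h2; repeat case: ifP => /eqP ?; rewrite /=; lia.
Qed.

Lemma inv_step (p : 'S_k) (i : 'I_k) : (i.+1 < k)%N ->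
  (inv (sigma i * p)%g + (p (nxt i) < p i)%N = inv p + (p i < p (nxt i))%N)%N.
Proof.
move=> h.
have hn := @nxtE _ i h.
rewrite /inv.
rewrite [in RHS](reindex_inj (@perm_inj _ (sigma i))) /=.
under [in RHS]eq_bigr do rewrite (reindex_inj (@perm_inj _ (sigma i))) /=.
rewrite !pair_bigA /=.
rewrite (bigD1 (i, nxt i)) //= (bigD1 (nxt i, i)) /=; last by rewrite xpair_eqE (negbTE (@nxt_neq _ i h)).
rewrite [in RHS](bigD1 (i, nxt i)) //= [in RHS](bigD1 (nxt i, i)) /=; last by rewrite xpair_eqE (negbTE (@nxt_neq _ i h)).
rewrite !permM !sigmaL !sigmaR.
set S1 := (\sum_(x | _) _)%N.
set S2 := (\sum_(x | _) _)%N.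
have -> : S1 = S2.
  apply: eq_bigr => [[j l]] /andP[/= h1 h2].
  rewrite !permM; congr (_ && _).
  apply: sigma_lt_eq => //.
  - by move: h1; rewrite xpair_eqE -!val_eqE /= hn.
  - by move: h2; rewrite xpair_eqE -!val_eqE /= hn andbC.
rewrite hn ltnSn.
have -> : (i.+1 < i)%N = false by lia.
rewrite /=; set a := nat_of_bool (p i < p (nxt i))%N; set b := nat_of_bool (p (nxt i) < p i)%N; lia.
Qed.

End Inv.
Arguments inv {k} p.
Arguments inv_step {k} p i _.
Arguments sigma_lt_eq {k} i j l _ _ _.
Section Bubble.
Variable k : nat.

Lemma inv_le (s : seq 'I_k) : valid_word s -> (inv (word_perm s) <= size s)%N.
Proof.
elim/last_ind: s => [|s i IH] /=.
  move=> _; rewrite /inv big1 // => j _; rewrite big1 // => l _.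
  by rewrite !perm1; case: (ltngtP j l).
rewrite valid_rcons => /andP[hs hi].
rewrite word_perm_rcons size_rcons.
have := inv_step (word_perm s) i hi; have := IH hs.
set a := nat_of_bool _; set b := nat_of_bool _.
have : (a <= 1)%N by rewrite /a; case: (_ < _)%N.
have : (b <= 1)%N by rewrite /b; case: (_ < _)%N.
lia.
Qed.

Lemma inv1 : inv (1%g : 'S_k) = 0%N.
Proof.
rewrite /inv big1 // => j _; rewrite big1 // => l _.
by rewrite !perm1; case: (ltngtP j l).
Qed.

Lemma incr_perm (p : 'S_k) :
  (forall i : 'I_k, (i.+1 < k)%N -> (p i < p (nxt i))%N) -> p = 1%g.
Proof.
move=> hinc.
have ge : forall n (j : 'I_k), nat_of_ord j = n -> (n <= p j)%N.
  elim=> [//|n IH] j hj.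
  have hn : (n < k)%N by have := ltn_ord j; lia.
  have hnk : ((Ordinal hn).+1 < k)%N by rewrite /= -hj.
  have ej : nxt (Ordinal hn) = j by apply: val_inj; rewrite nxtE.
  have := hinc _ hnk; rewrite ej.
  have := IH (Ordinal hn) erefl; lia.
have eq : forall n (j : 'I_k), nat_of_ord j = n -> p j = j.
  elim/ltn_ind=> n IH j hj.
  set m := (p^-1)%g j.
  have pm : p m = j by rewrite /m permKV.
  have := ge _ m erefl; rewrite pm => hm.
  case: (ltngtP m j) => [lt|gt|e].
  - have := IH m (leq_trans lt (eq_leq hj)) m erefl; rewrite pm => e.
    by move: lt; rewrite e ltnn.
  - by move: gt; rewrite ltnNge hm.
  - have e' : m = j by apply: val_inj.
    by rewrite -{1}e' pm.
by apply/permP => j; rewrite perm1 (eq _ j erefl).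
Qed.

Lemma bubble (p : 'S_k) : exists s, [/\ valid_word s, word_perm s = p & size s = inv p].
Proof.
move: {2}(inv p) (erefl (inv p)) => n; elim: n p => [|n IH] p hp.
  case: (eqVneq p 1%g) => [->|np].
    by exists [::]; rewrite inv1.
  exfalso; apply: (negP np); apply/eqP; apply: incr_perm => i hi.
  have := inv_step p i hi; rewrite hp.
  have : p i != p (nxt i) by rewrite (inj_eq (@perm_inj _ p)) eq_sym (nxt_neq hi).
  set a := nat_of_bool _; set b := nat_of_bool _.
  rewrite /a /b; case: ltngtP => //= [_ _|/val_inj ->]; [by rewrite addn1 | by rewrite eqxx].
case: (eqVneq p 1%g) => [e|np].
  by move: hp; rewrite e inv1.
have : exists i : 'I_k, (i.+1 < k)%N && (p (nxt i) < p i)%N.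
  apply/existsP; apply: contraR np => /existsPn hn; apply/eqP.
  apply: incr_perm => i hi.
  have := hn i; rewrite hi /= -leqNgt leq_eqVlt => /orP[/eqP e|//].
  by have := @perm_inj _ p _ _ (val_inj e); move/eqP; rewrite eq_sym (negbTE (nxt_neq hi)).
move=> [i /andP[hi hd]].
set p' := (sigma i * p)%g.
have pp : (sigma i * p')%g = p by rewrite /p' mulgA sigma2 mul1g.
have := inv_step p' i hi; rewrite pp /p' !permM sigmaL sigmaR hd /=.
have -> : (p i < p (nxt i))%N = false by apply/negbTE; rewrite -leqNgt ltnW.
rewrite hp addn0 => e.
have e' : inv p' = n by rewrite /p'; lia.
have [s [hs hw hsz]] := IH p' e'.
exists (rcons s i); split.
- by rewrite valid_rcons hs hi.
- by rewrite word_perm_rcons hw pp.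
- by rewrite size_rcons hsz; lia.
Qed.

Lemma reduced_inv (s : seq 'I_k) p : reduced_word s p -> valid_word s /\ size s = inv p.
Proof.
case=> hv hw hmin; split => //.
have [s' [h1 h2 h3]] := bubble p.
have := hmin s' h1 h2; have := inv_le _ hv; rewrite hw h3; lia.
Qed.

Definition red (s : seq 'I_k) := valid_word s && (size s == inv (word_perm s)).

Lemma red_rcons s i : red (rcons s i) ->
  [/\ red s, (i.+1 < k)%N & (word_perm s i < word_perm s (nxt i))%N].
Proof.
rewrite /red valid_rcons size_rcons word_perm_rcons => /andP[/andP[hs hi] /eqP e].
have st := inv_step (word_perm s) i hi.
have le := inv_le _ hs.
have ne : word_perm s i != word_perm s (nxt i).
  by rewrite (inj_eq (@perm_inj _ _)) eq_sym (nxt_neq hi).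
move: st e le ne; set P := word_perm s.
case: ltngtP => h1 /= st e le ne.
- exfalso; lia.
- split => //; rewrite hs /=; apply/eqP; lia.
- by rewrite (val_inj h1) eqxx in ne.
Qed.

End Bubble.
Arguments red {k} s.
Arguments red_rcons {k s i} _.
Arguments reduced_inv {k} s p _.
Section Vanish0.
Variables (R : fieldType) (k : nat).

Lemma K_vanish0 (q : R) (s : seq 'I_k) (tau : 'S_k) (a : 'I_k) (w : 'I_k -> R) :
  red s -> generic w -> (word_perm s ((tau^-1)%g a) < a)%N -> w a = 0 ->
  Tword q s tau w = 0.
Proof.
move=> + gw + wa; elim/last_ind: s tau => [|s i IH] tau.
  move=> _; rewrite /= perm1 /opid; case: eqP => // ->.
  by rewrite invg1 perm1 ltnn.
move=> /red_rcons [hs hi hasc].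
rewrite word_perm_rcons permM => h.
rewrite Krec //.
rewrite [Tword q s (sigma i * tau)%g w]IH ?mul0r ?addr0 //; last by rewrite permV_sigma.
set j := (tau^-1)%g a in h *.
case: (eqVneq j i) => [ej|nji].
  rewrite IH ?mul0r // -/j ej; rewrite ej sigmaL in h; exact: ltn_trans hasc h.
case: (eqVneq j (nxt i)) => [ej|njn].
  have ta : tau (nxt i) = a by rewrite -ej /j permKV.
  have ne : tau i != tau (nxt i) by rewrite (inj_eq (@perm_inj _ _)) eq_sym nxt_neq.
  have x0 : w (tau i) != 0 by rewrite -wa -ta; apply: gw.
  by rewrite ta wa !sub0r invrN mulrNN mulfK // subrr mulr0.
rewrite IH ?mul0r //.
by rewrite /sigma tpermD // eq_sym in h.
Qed.

End Vanish0.
Section Asym.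
Variable R : realFieldType.
Implicit Types (f g : R -> R).

Definition ev (P : R -> Prop) := exists M : R, forall t, M < `|t| -> P t.
Definition bnd f := exists C : R, ev (fun t => `|f t| <= C).
Definition t0 f := forall e : R, 0 < e -> ev (fun t => `|f t| < e).

Lemma ev_and P Q : ev P -> ev Q -> ev (fun t => P t /\ Q t).
Proof.
move=> [M1 h1] [M2 h2]; exists (`|M1| + `|M2|) => t ht.
have := ler_norm M1; have := ler_norm M2; have := normr_ge0 M1; have := normr_ge0 M2.
move=> *; split; [apply: h1|apply: h2]; lra.
Qed.

Arguments ev_and {P Q} _ _.

Lemma ev_mono (P Q : R -> Prop) : (forall t, P t -> Q t) -> ev P -> ev Q.
Proof. by move=> h [M hM]; exists M => t /hM /h. Qed.
Arguments ev_mono {P Q} _ _.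

Lemma bnd_const c : bnd (fun _ => c).
Proof. by exists `|c|, 0 => t _. Qed.

Lemma bndD f g : bnd f -> bnd g -> bnd (fun t => f t + g t).
Proof.
move=> [C1 h1] [C2 h2]; exists (C1 + C2).
move: (ev_and h1 h2); apply: ev_mono => t [a b].
by apply: le_trans (ler_normD _ _) _; apply: lerD.
Qed.

Lemma bndN f : bnd f -> bnd (fun t => - f t).
Proof. by move=> [C h]; exists C; move: h; apply: ev_mono => t; rewrite normrN. Qed.

Lemma bndM f g : bnd f -> bnd g -> bnd (fun t => f t * g t).
Proof.
move=> [C1 h1] [C2 h2]; exists (C1 * C2).
move: (ev_and h1 h2); apply: ev_mono => t [a b].
rewrite normrM; apply: ler_pM => //.
Qed.

Lemma t0D f g : t0 f -> t0 g -> t0 (fun t => f t + g t).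
Proof.
move=> h1 h2 e e0.
have e2 : 0 < e / 2 by rewrite divr_gt0.
move: (ev_and (h1 _ e2) (h2 _ e2)); apply: ev_mono => t [a b].
apply: le_lt_trans (ler_normD _ _) _.
have -> : e = e / 2 + e / 2 by rewrite -splitr.
by apply: ltrD.
Qed.

Lemma t0M f g : bnd f -> t0 g -> t0 (fun t => f t * g t).
Proof.
move=> [C h1] h2 e e0.
set C' := `|C| + 1.
have C'0 : 0 < C' by rewrite /C'; have := normr_ge0 C; lra.
have e2 : 0 < e / C' by rewrite divr_gt0.
move: (ev_and h1 (h2 _ e2)); apply: ev_mono => t [a b].
rewrite normrM.
have hC : `|f t| <= C' by have := ler_norm C; rewrite /C'; lra.
apply: le_lt_trans (ler_wpM2r (normr_ge0 _) hC) _.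
by rewrite mulrC -ltr_pdivlMr.
Qed.

Lemma t0_ev f g : ev (fun t => f t = g t) -> t0 g -> t0 f.
Proof.
move=> he hg e e0; move: (ev_and he (hg _ e0)); apply: ev_mono => t [-> //].
Qed.

Lemma bnd_ev f g : ev (fun t => f t = g t) -> bnd g -> bnd f.
Proof.
move=> he [C hg]; exists C; move: (ev_and he hg); apply: ev_mono => t [-> //].
Qed.

Lemma tri (t c : R) : `|t| <= `|t + c| + `|c|.
Proof. by have := ler_normD (t + c) (- c); rewrite normrN addrK. Qed.

Lemma bnd_frac (al be ga : R) : bnd (fun t => (al * t + be) / (t + ga)).
Proof.
exists (2 * `|al| + 2 * `|be|), (2 * `|ga| + 1) => t ht.
have h1 := tri t ga.
have h2 : `|al * t + be| <= `|al| * `|t| + `|be|.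
  by apply: le_trans (ler_normD _ _) _; rewrite normrM.
have g0 := normr_ge0 ga; have a0 := normr_ge0 al; have b0 := normr_ge0 be.
have d0 : 0 < `|t + ga| by lra.
rewrite normrM normfV ler_pdivrMr //.
nra.
Qed.

Lemma t0_frac (be ga : R) : t0 (fun t => be / (t + ga)).
Proof.
move=> e e0.
exists (2 * `|ga| + `|be| / e + 1) => t ht.
have h1 := tri t ga.
have g0 := normr_ge0 ga; have b0 := normr_ge0 be.
have B0 : 0 <= `|be| / e by rewrite divr_ge0 // ltW.
have hb : `|be| = `|be| / e * e by rewrite divfK // gt_eqF.
have d0 : 0 < `|t + ga| by lra.
rewrite normrM normfV ltr_pdivrMr //.
rewrite hb; set B := `|be| / e in B0 ht *.
nra.
Qed.

End Asym.
Arguments ev {R} P.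
Arguments bnd {R} f.
Arguments t0 {R} f.
Arguments ev_and {R P Q} _ _.
Arguments ev_mono {R P Q} _ _.
Arguments t0_ev {R} f g _ _.
Arguments bnd_ev {R} f g _ _.
Section Infty.
Variables (R : realFieldType) (k : nat).

Lemma ev_all (P : R -> Prop) : (forall t, P t) -> ev P.
Proof. by move=> h; exists 0 => t _. Qed.

Lemma t0M' (f g : R -> R) : t0 f -> bnd g -> t0 (fun t => f t * g t).
Proof.
move=> hf hg; apply: (t0_ev _ (fun t => g t * f t)).
  by apply: ev_all => t; rewrite mulrC.
exact: t0M.
Qed.

Lemma coef_bnd (q : R) (w : 'I_k -> R) (a u v : 'I_k) : u != v ->
  bnd (fun t => (upd w a t u - q * upd w a t v) / (upd w a t u - upd w a t v)).
Proof.
move=> uv; rewrite /upd.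
case: (eqVneq u a) => [eu|ua].
  subst u; rewrite eq_sym in uv; rewrite (negbTE uv).
  apply: (bnd_ev _ (fun t => (1 * t + - (q * w v)) / (t + - w v))).
    by apply: ev_all => t; rewrite mul1r.
  exact: bnd_frac.
case: (eqVneq v a) => [ev'|va].
  subst v.
  apply: (bnd_ev _ (fun t => (q * t + - w u) / (t + - w u))).
    apply: ev_all => t.
    have -> : w u - q * t = - (q * t + - w u) by rewrite opprD opprK addrC.
    have -> : w u - t = - (t + - w u) by rewrite opprD opprK addrC.
    by rewrite invrN mulrNN.
  exact: bnd_frac.
exact: bnd_const.
Qed.

Lemma A_t0 (q : R) (z : R) : t0 (fun t => q - (z - q * t) / (z - t)).
Proof.
apply: (t0_ev _ (fun t => ((1 - q) * z) / (t + - z))); last exact: t0_frac.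
exists `|z| => t ht.
have h1 : z - t != 0.
  apply/eqP => e; move: ht; have -> : t = z by apply/eqP; rewrite eq_sym -subr_eq0 e.
  by rewrite ltxx.
have h2 : t + - z != 0 by rewrite -opprB oppr_eq0.
by field; rewrite ?h1 ?h2.
Qed.

Lemma K_infty (q : R) (s : seq 'I_k) (a : 'I_k) (w : 'I_k -> R) : red s ->
  forall tau : 'S_k,
  bnd (fun t => Tword q s tau (upd w a t)) /\
  ((a < word_perm s ((tau^-1)%g a))%N -> t0 (fun t => Tword q s tau (upd w a t))).
Proof.
elim/last_ind: s => [|s i IH] hred tau.
  split.
    exists 1; apply: ev_all => t; rewrite /= /opid.
    by case: eqP; rewrite ?normr1 ?normr0 ?ler01.
  rewrite /= perm1 /opid; case: eqP => [->|_].
    by rewrite invg1 perm1 ltnn.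
  move=> _ e e0; apply: ev_all => t; by rewrite normr0.
have [hs hi hasc] := red_rcons hred.
have ne : tau i != tau (nxt i) by rewrite (inj_eq (@perm_inj _ _)) eq_sym nxt_neq.
have Ab : bnd (fun t => q - (upd w a t (tau (nxt i)) - q * upd w a t (tau i)) /
                            (upd w a t (tau (nxt i)) - upd w a t (tau i))).
  by apply: bndD; [exact: bnd_const | apply: bndN; apply: coef_bnd; rewrite eq_sym].
have Bb := coef_bnd q w a _ _ ne.
set A := (fun t => _) in Ab; set B := (fun t => _) in Bb.
have E : ev (fun t => Tword q (rcons s i) tau (upd w a t) =
   Tword q s tau (upd w a t) * A t + Tword q s (sigma i * tau)%g (upd w a t) * B t).
  by apply: ev_all => t; rewrite Krec.
have [IH1 IH2] := IH hs tau.
have [IH1' IH2'] := IH hs (sigma i * tau)%g.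
split.
  apply: (bnd_ev _ _ E); apply: bndD; apply: bndM => //.
rewrite word_perm_rcons permM => h.
apply: (t0_ev _ _ E); apply: t0D; last first.
  by apply: t0M' => //; apply: IH2'; rewrite permV_sigma.
set j := (tau^-1)%g a in h.
case: (eqVneq j i) => [ej|nji].
  have ta : tau i = a by rewrite -ej /j permKV.
  have na : tau (nxt i) != a by rewrite -ta eq_sym.
  apply: t0M => //.
  apply: (t0_ev _ (fun t => q - (w (tau (nxt i)) - q * t) / (w (tau (nxt i)) - t))).
    by apply: ev_all => t; rewrite /A /upd ta eqxx (negbTE na).
  exact: A_t0.
apply: t0M' => //; apply: IH2.
case: (eqVneq j (nxt i)) => [ej|njn].
  by rewrite -/j ej; rewrite ej sigmaR in h; apply: ltn_trans h hasc.
by rewrite -/j; rewrite /sigma tpermD // eq_sym in h.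
Qed.

End Infty.
Section Poly.
Variables (R : fieldType) (k : nat).
Local Notation MP := {mpoly R[k]}.

Definition phi (m n : 'I_k) (p : MP) : MP :=
  p \mPo [tuple (if j == m then 'X_n else 'X_j : MP) | j < k].

Lemma phiD m n : {morph phi m n : x y / x + y}.
Proof. by move=> x y; rewrite /phi rmorphD. Qed.
Lemma phiB m n : {morph phi m n : x y / x - y}.
Proof. by move=> x y; rewrite /phi rmorphB. Qed.
Lemma phiM m n : {morph phi m n : x y / x * y}.
Proof. by move=> x y; rewrite /phi rmorphM. Qed.
Lemma phiC m n c : phi m n c%:MP = c%:MP.
Proof. by rewrite /phi comp_mpolyC. Qed.
Lemma phi0 m n : phi m n 0 = 0.
Proof. by rewrite /phi rmorph0. Qed.
Lemma phiX m n j : phi m n 'X_j = 'X_(if j == m then n else j).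
Proof. by rewrite /phi comp_mpolyXU -tnth_nth tnth_mktuple; case: eqP. Qed.
Lemma phi_prod m n (I : Type) (r : seq I) (P : pred I) (F : I -> MP) :
  phi m n (\prod_(i <- r | P i) F i) = \prod_(i <- r | P i) phi m n (F i).
Proof. by rewrite /phi rmorph_prod. Qed.

Lemma divL m n (F : MP) : exists G, F - phi m n F = ('X_m - 'X_n) * G.
Proof.
pose dv (F : MP) := exists G, F - phi m n F = ('X_m - 'X_n) * G.
have dvD : forall F1 F2, dv F1 -> dv F2 -> dv (F1 + F2).
  move=> F1 F2 [G1 e1] [G2 e2]; exists (G1 + G2).
  by rewrite phiD mulrDr -e1 -e2; ring.
have dvM : forall F1 F2, dv F1 -> dv F2 -> dv (F1 * F2).
  move=> F1 F2 [G1 e1] [G2 e2]; exists (G1 * F2 + phi m n F1 * G2).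
  have -> : F1 * F2 - phi m n (F1 * F2) =
     (F1 - phi m n F1) * F2 + phi m n F1 * (F2 - phi m n F2) by rewrite phiM; ring.
  by rewrite e1 e2; ring.
have dvC : forall c, dv c%:MP by move=> c; exists 0; rewrite phiC subrr mulr0.
have dv1 : dv 1 by rewrite -mpolyC1.
have dv0 : dv 0 by rewrite -mpolyC0.
have dvX : forall j, dv 'X_j.
  move=> j; rewrite /dv phiX; case: eqP => [->|_].
    by exists 1; rewrite mulr1.
  by exists 0; rewrite subrr mulr0.
suff : dv F by [].
rewrite [F]mpolyE; apply: big_ind => [//|x y hx hy|mm _]; first exact: dvD.
rewrite -mul_mpolyC; apply: (dvM) => //.
rewrite mpolyXE_id; apply: big_ind => [//|x y hx hy|j _]; first exact: dvM.
elim: (mm j) => [|e IH]; first by rewrite expr0.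
by rewrite exprS; apply: (dvM).
Qed.

Lemma divL' m n (F : MP) : phi m n F = 0 -> exists G, F = ('X_m - 'X_n) * G.
Proof. by move=> h; have [G e] := divL m n F; exists G; rewrite -e h subr0. Qed.

Lemma Xsub_neq0 (a b : 'I_k) : a != b -> ('X_a - 'X_b : MP) != 0.
Proof.
move=> ab; apply/eqP => h.
have := congr1 (meval (fun j => (j == a)%:R)) h.
rewrite mevalB !mevalXU eqxx eq_sym (negbTE ab) meval0 subr0 => /eqP.
by rewrite oner_eq0.
Qed.

Definition Vp : MP := \prod_(i : 'I_k) \prod_(j : 'I_k | (i < j)%N) ('X_j - 'X_i).

Lemma Vp_eval w : Vp.@[w] = vdm w.
Proof.
rewrite /Vp /vdm rmorph_prod; apply: eq_bigr => i _.
rewrite rmorph_prod; apply: eq_bigr => j _.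
by rewrite rmorphB /= !mevalXU.
Qed.

Lemma phiVp m n : m != n -> phi m n Vp = 0.
Proof.
move=> mn; rewrite /Vp phi_prod.
have key : forall a b : 'I_k, (a < b)%N -> phi m n ('X_b - 'X_a) = 0 ->
   \prod_(i : 'I_k) phi m n (\prod_(j : 'I_k | (i < j)%N) ('X_j - 'X_i)) = 0.
  move=> a b ab h; rewrite (bigD1 a) //= phi_prod (bigD1 b) //= h.
  by rewrite mul0r mul0r.
case: (ltngtP m n) => [lt|gt|e].
- by apply: (key m n lt); rewrite phiB !phiX eqxx if_same subrr.
- by apply: (key n m gt); rewrite phiB !phiX eqxx if_same subrr.
- by move: mn; rewrite (val_inj e) eqxx.
Qed.

Lemma sigma_conj (i : 'I_k) (tau : 'S_k) :
  (sigma i * tau = tau * tperm (tau (nxt i)) (tau i))%g.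
Proof. by rewrite tpermC -tpermJ conjgE mulgA mulgV mul1g. Qed.

Lemma tperm_neq1 (m n : 'I_k) : m != n -> tperm m n != 1%g.
Proof.
move=> mn; apply/eqP => /(congr1 (fun p : 'S_k => p m)).
by rewrite tpermL perm1 => e; move: mn; rewrite e eqxx.
Qed.

Lemma poly_inv (q : R) (s : seq 'I_k) : valid_word s ->
  exists P : 'S_k -> MP,
   (forall rho w, generic w -> vdm w * Tword q s rho w = (P rho).@[w]) /\
   (forall rho m n, m != n -> phi m n (P rho + P (rho * tperm m n)%g) = 0).
Proof.
elim/last_ind: s => [|s i IH].
  move=> _; exists (fun rho => if rho == 1%g then Vp else 0); split.
    move=> rho w _; rewrite /= /opid; case: eqP => _.
      by rewrite mulr1 Vp_eval.
    by rewrite mulr0 meval0.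
  move=> rho m n mn.
  case: (eqVneq rho 1%g) => [->|r1].
    by rewrite mul1g (negbTE (tperm_neq1 _ _ mn)) addr0 phiVp.
  case: (eqVneq (rho * tperm m n)%g 1%g) => [_|r2].
    by rewrite add0r phiVp.
  by rewrite addr0 phi0.
rewrite valid_rcons => /andP[hs hi].
have [P [H1 H2]] := IH hs.
set sg := sigma i.
have hG : forall tau : 'S_k, exists G : MP,
    P tau + P (sg * tau)%g = ('X_(tau (nxt i)) - 'X_(tau i)) * G.
  move=> tau; apply: divL'.
  have ne : tau (nxt i) != tau i by rewrite (inj_eq (@perm_inj _ _)) nxt_neq.
  by have := H2 tau _ _ ne; rewrite /sg sigma_conj.
have [Gf HG] := fin_all_exists hG.
exists (fun tau : 'S_k => ((q - 1)%:MP * 'X_(tau (nxt i))) * Gf tau + P (sg * tau)%g).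
split.
  move=> tau w gw.
  have ne : tau i != tau (nxt i) by rewrite (inj_eq (@perm_inj _ _)) eq_sym nxt_neq.
  have d1 : w (tau (nxt i)) - w (tau i) != 0 by rewrite subr_eq0; apply: gw; rewrite eq_sym.
  have d2 : w (tau i) - w (tau (nxt i)) != 0 by rewrite subr_eq0; apply: gw.
  rewrite Krec // mulrDr !mulrA H1 // H1 // -/sg.
  have := congr1 (meval w) (HG tau).
  rewrite mevalD mevalM mevalB !mevalXU => ea.
  rewrite mevalD !mevalM mevalC mevalXU.
  move: ea; set a := (P tau).@[w]; set b := (P (sg * tau)%g).@[w].
  set g := (Gf tau).@[w]; set X := w (tau i); set Y := w (tau (nxt i)) => ea.
  have -> : a = (Y - X) * g - b by rewrite -ea addrK.
  by field; rewrite ?d1 ?d2.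
move=> rho m n mn.
set t := tperm m n; set rho' := (rho * t)%g.
have e1 : (sg * rho' = (sg * rho) * t)%g by rewrite /rho' mulgA.
have Hs := H2 (sg * rho)%g m n mn.
have Hr := H2 rho m n mn.
rewrite -/t -e1 in Hs; rewrite -/t -/rho' in Hr.
set x := rho i; set y := rho (nxt i).
have xy : x != y by rewrite (inj_eq (@perm_inj _ _)) eq_sym nxt_neq.
set c := (q - 1)%:MP.
case: (boolP (((x == m) && (y == n)) || ((x == n) && (y == m)))) => hxy.
  have et : t = tperm y x.
    by rewrite /t; case/orP: hxy => /andP[/eqP <- /eqP <-] //; exact: tpermC.
  have er : rho' = (sg * rho)%g by rewrite /rho' et /sg sigma_conj.
  have ess : (sg * (sg * rho) = rho)%g by rewrite mulgA /sg sigma2 mul1g.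
  have Er := HG rho; have Es := HG (sg * rho)%g.
  rewrite -/sg ess !permM /sg sigmaR sigmaL -/x -/y -/sg in Es.
  rewrite -/sg -/x -/y in Er.
  have Gs : Gf (sg * rho)%g = - Gf rho.
    have : ('X_y - 'X_x : MP) * (Gf rho + Gf (sg * rho)%g) = 0.
      rewrite mulrDr -Er.
      have -> : ('X_y - 'X_x : MP) = - ('X_x - 'X_y) by rewrite opprB.
      by rewrite mulNr -Es; ring.
    move/eqP; rewrite mulf_eq0 (negbTE (Xsub_neq0 y x _)) /=; last by rewrite eq_sym.
    by rewrite addrC addr_eq0 => /eqP.
  rewrite er ess !permM /sg sigmaR -/sg -/x -/y Gs.
  have -> : c * 'X_y * Gf rho + P (sg * rho)%g + (c * 'X_x * - Gf rho + P rho) =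
            c * (('X_y - 'X_x) * Gf rho) + (P rho + P (sg * rho)%g) by ring.
  rewrite -Er phiD phiM.
  by rewrite -er Hr mulr0 addr0.
have fne : forall j, (if j == m then n else j) = (if t j == m then n else t j).
  move=> j; rewrite /t; case: tpermP => [->|->|/eqP a /eqP b].
  - by rewrite eqxx eq_sym (negbTE mn).
  - by rewrite eqxx eq_sym (negbTE mn).
  - by rewrite (negbTE a).
have phiXt : forall j, phi m n 'X_(t j) = phi m n 'X_j by move=> j; rewrite !phiX -fne.
have nd : phi m n ('X_y - 'X_x) != 0.
  rewrite phiB !phiX; apply: Xsub_neq0.
  move: hxy xy; case: (eqVneq y m) => [->|ym]; case: (eqVneq x m) => [->|xm] //=.
  - by rewrite andbT eq_sym.
  - by rewrite andbF orbF.
  - by move=> _; rewrite eq_sym.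
have Er := HG rho; have Ep := HG rho'.
rewrite -/sg -/x -/y in Er.
rewrite -/sg /rho' !permM -/x -/y in Ep.
have eq1 : phi m n (P rho) + phi m n (P (sg * rho)%g) = phi m n ('X_y - 'X_x) * phi m n (Gf rho).
  by rewrite -phiD Er phiM.
have eq2 : phi m n (P rho') + phi m n (P (sg * rho')%g) = phi m n ('X_y - 'X_x) * phi m n (Gf rho').
  by rewrite -phiD /rho' Ep phiM !phiB !phiXt.
rewrite phiD in Hr; rewrite phiD in Hs.
have hG0 : phi m n (Gf rho) + phi m n (Gf rho') = 0.
  have : phi m n ('X_y - 'X_x) * (phi m n (Gf rho) + phi m n (Gf rho')) = 0.
    rewrite mulrDr -eq1 -eq2.
    have -> : phi m n (P rho) + phi m n (P (sg * rho)%g) + (phi m n (P rho') + phi m n (P (sg * rho')%g)) =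
       (phi m n (P rho) + phi m n (P rho')) + (phi m n (P (sg * rho)%g) + phi m n (P (sg * rho')%g)) by ring.
    by rewrite Hr Hs addr0.
  by move/eqP; rewrite mulf_eq0 (negbTE nd) /= => /eqP.
rewrite /rho' !permM -/x -/y -/rho' !phiD !phiM phiC phiXt.
have -> : (q - 1)%:MP * phi m n 'X_y * phi m n (Gf rho) + phi m n (P (sg * rho)%g) +
  ((q - 1)%:MP * phi m n 'X_y * phi m n (Gf rho') + phi m n (P (sg * rho')%g)) =
  (q - 1)%:MP * phi m n 'X_y * (phi m n (Gf rho) + phi m n (Gf rho')) +
  (phi m n (P (sg * rho)%g) + phi m n (P (sg * rho')%g)) by ring.
by rewrite hG0 Hs mulr0 addr0.
Qed.

End Poly.
Theorem proposition3p3 (R : realFieldType) (q : R) (hq : 0 < q < 1)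
  (k : nat) (pi rho : 'S_k) (s : seq 'I_k) (hs : reduced_word s pi) :
  [/\
   (* (1) prod_{i<j}(w_j - w_i) kappa is a polynomial *)
   exists P : {mpoly R[k]},
     forall w : 'I_k -> R, generic w -> vdm w * kappa q s rho w = P.@[w],
   (* (2) vanishing on w_a = z, w_b = q z *)
   forall a b : 'I_k, (a < b)%N -> ((rho^-1)%g b < (rho^-1)%g a)%N ->
     forall w : 'I_k -> R, generic w -> w b = q * w a -> kappa q s rho w = 0,
   (* (3a) vanishing at w_a = 0 *)
   forall a : 'I_k, (pi ((rho^-1)%g a) < a)%N ->
     forall w : 'I_k -> R, generic w -> w a = 0 -> kappa q s rho w = 0 &
   (* (3b) vanishing as w_a -> infinity *)
   forall a : 'I_k, (a < pi ((rho^-1)%g a))%N ->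
     forall w : 'I_k -> R, (forall i j, i != a -> j != a -> i != j -> w i != w j) ->
     forall e : R, 0 < e -> exists M : R, forall t : R, M < `|t| ->
       `|kappa q s rho (upd w a t)| < e].
Proof.
have [hv hsz] := reduced_inv s pi hs.
have hw : word_perm s = pi by case: hs.
have hred : red s by rewrite /red hv hw hsz eqxx.
split.
- have [P [H1 _]] := @poly_inv R k q s hv.
  by exists (P rho) => w gw; rewrite /kappa; apply: H1.
- move=> a b ab hab w gw wab; rewrite /kappa.
  exact: (@K_vanish_q R k q s rho a b w hv ab hab wab).
- move=> a ha w gw wa; rewrite /kappa.
  by apply: (@K_vanish0 R k q s rho a w hred gw _ wa); rewrite hw.
- move=> a ha w _ e e0.
  have [_ h] := @K_infty R k q s a w hred rho.
  rewrite hw in h; exact: (h ha e e0).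
Qed.
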